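(* Assume the setting below, with $f$ twice continuously differentiable and $\mathbf{H}(\mathbf{x})=d^2f(\mathbf{x})$ positive definite for every $\mathbf{x}$. Let $I\subset(0,\infty)$ be an open interval such that for every $\rho\in I$ the function $\mathcal{E}_\rho$ has a (necessarily unique) minimizer $\mathbf{x}(\rho)$, the map $\rho\mapsto\mathbf{x}(\rho)$ is continuous on $I$, the index sets $\mathcal{N}_E,\mathcal{Z}_E,\mathcal{P}_E,\mathcal{N}_I,\mathcal{Z}_I,\mathcal{P}_I$ computed at $\mathbf{x}(\rho)$ do not depend on $\rho\in I$, and the rows of $\mathbf{U}_{\mathcal{Z}}$ are linearly independent. Then $\rho\mapsto\mathbf{x}(\rho)$ is differentiable on $I$ and satisfies the ordinary differential equation $$\frac{d\mathbf{x}(\rho)}{d\rho}=-\mathbf{P}(\mathbf{x}(\rho))\,\mathbf{u}_{\bar{\mathcal{Z}}}.$$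
   Context: Setting: $f:\mathbb{R}^p\to\mathbb{R}$ convex and twice continuously differentiable; vectors $\mathbf{v}_1,\dots,\mathbf{v}_r,\mathbf{w}_1,\dots,\mathbf{w}_s\in\mathbb{R}^p$ and scalars $d_1,\dots,d_r,e_1,\dots,e_s$; $g_i(\mathbf{x})=\mathbf{v}_i^t\mathbf{x}-d_i$, $h_j(\mathbf{x})=\mathbf{w}_j^t\mathbf{x}-e_j$; $\mathcal{E}_\rho(\mathbf{x})=f(\mathbf{x})+\rho\sum_i|g_i(\mathbf{x})|+\rho\sum_j\max\{0,h_j(\mathbf{x})\}$ (equivalently $f(\mathbf{x})+\rho\|\mathbf{V}\mathbf{x}-\mathbf{d}\|_1+\rho\|\mathbf{W}\mathbf{x}-\mathbf{e}\|_+$, where $\|\mathbf{v}\|_+=\sum_i\max\{v_i,0\}$). Index sets at $\mathbf{x}$: $\mathcal{N}_E=\{i:g_i(\mathbf{x})<0\}$, $\mathcal{Z}_E=\{i:g_i(\mathbf{x})=0\}$, $\mathcal{P}_E=\{i:g_i(\mathbf{x})>0\}$, $\mathcal{N}_I=\{j:h_j(\mathbf{x})<0\}$, $\mathcal{Z}_I=\{j:h_j(\mathbf{x})=0\}$, $\mathcal{P}_I=\{j:h_j(\mathbf{x})>0\}$. $\mathbf{U}_{\mathcal{Z}}$ is the matrix whose rows are $\mathbf{v}_i^t$, $i\in\mathcal{Z}_E$, and $\mathbf{w}_j^t$, $j\in\mathcal{Z}_I$. $\mathbf{u}_{\bar{\mathcal{Z}}}=-\sum_{i\in\mathcal{N}_E}\mathbf{v}_i+\sum_{i\in\mathcal{P}_E}\mathbf{v}_i+\sum_{j\in\mathcal{P}_I}\mathbf{w}_j$.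 With $\mathbf{H}=\mathbf{H}(\mathbf{x})=d^2f(\mathbf{x})$ invertible and $\mathbf{U}_{\mathcal{Z}}$ of full row rank: $\mathbf{P}(\mathbf{x})=\mathbf{H}^{-1}-\mathbf{H}^{-1}\mathbf{U}_{\mathcal{Z}}^t[\mathbf{U}_{\mathcal{Z}}\mathbf{H}^{-1}\mathbf{U}_{\mathcal{Z}}^t]^{-1}\mathbf{U}_{\mathcal{Z}}\mathbf{H}^{-1}$, $\mathbf{Q}(\mathbf{x})=\mathbf{H}^{-1}\mathbf{U}_{\mathcal{Z}}^t[\mathbf{U}_{\mathcal{Z}}\mathbf{H}^{-1}\mathbf{U}_{\mathcal{Z}}^t]^{-1}$, $\mathbf{R}(\mathbf{x})=-[\mathbf{U}_{\mathcal{Z}}\mathbf{H}^{-1}\mathbf{U}_{\mathcal{Z}}^t]^{-1}$ (these are the blocks of the inverse of $\begin{pmatrix}\mathbf{H}&\mathbf{U}_{\mathcal{Z}}^t\\\mathbf{U}_{\mathcal{Z}}&\mathbf{0}\end{pmatrix}$). *)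

(* Defs.v *)
(* classical reals.  Vectors of R^p are modelled as
   functions nat -> R of which only the coordinates 0..p-1 are meaningful;
   matrices as nat -> nat -> R. *)
From Stdlib Require Import Reals Lra List ClassicalEpsilon.
Open Scope R_scope.

Definition vec := nat -> R.
Definition mat := nat -> nat -> R.

Fixpoint fsum (n : nat) (f : nat -> R) : R :=
  match n with O => 0 | S k => fsum k f + f k end.

Definition dot (p : nat) (u v : vec) : R := fsum p (fun i => u i * v i).
Definition vnorm (p : nat) (u : vec) : R := sqrt (dot p u u).
Definition vadd (u v : vec) : vec := fun i => u i + v i.
Definition vsub (u v : vec) : vec := fun i => u i - v i.
Definition vscale (t : R) (u : vec) : vec := fun i => t * u i.

Definition mmul (m : nat) (A B : mat) : mat :=
  fun i j => fsum m (fun l => A i l * B l j).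
Definition mvec (m : nat) (A : mat) (v : vec) : vec :=
  fun i => fsum m (fun l => A i l * v l).
Definition transp (A : mat) : mat := fun i j => A j i.
Definition idm : mat := fun i j => if Nat.eq_dec i j then 1 else 0.
Definition zero_mat : mat := fun _ _ => 0.

Definition is_inverse (n : nat) (A B : mat) : Prop :=
  forall i j, (i < n)%nat -> (j < n)%nat ->
    mmul n A B i j = idm i j /\ mmul n B A i j = idm i j.
(* the inverse matrix (chosen by Hilbert's epsilon; meaningful when A invertible) *)
Definition minv (n : nat) (A : mat) : mat :=
  epsilon (inhabits zero_mat) (fun B => is_inverse n A B).

Definition frechet_at (p : nat) (F : vec -> R) (x L : vec) : Prop :=
  forall eps, 0 < eps -> exists delta, 0 < delta /\
    forall h : vec, vnorm p h < delta ->
      Rabs (F (vadd x h) - F x - dot p L h) <= eps * vnorm p h.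

Definition cont_mat_at (p : nat) (M : vec -> mat) (x : vec) : Prop :=
  forall eps, 0 < eps -> exists delta, 0 < delta /\
    forall y : vec, vnorm p (vsub y x) < delta ->
      forall i j, (i < p)%nat -> (j < p)%nat -> Rabs (M y i j - M x i j) < eps.

Definition gfun (p : nat) (v : nat -> vec) (d : nat -> R) (i : nat) (x : vec) : R :=
  dot p (v i) x - d i.

Definition Epen (p r s : nat) (f : vec -> R) (v : nat -> vec) (d : nat -> R)
  (w : nat -> vec) (e : nat -> R) (rho : R) (x : vec) : R :=
  f x + rho * fsum r (fun i => Rabs (gfun p v d i x))
      + rho * fsum s (fun j => Rmax 0 (gfun p w e j x)).

Definition NE p r v d x i := (i < r)%nat /\ gfun p v d i x < 0.
Definition ZE p r v d x i := (i < r)%nat /\ gfun p v d i x = 0.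
Definition PE p r v d x i := (i < r)%nat /\ gfun p v d i x > 0.
Definition NI p s w e x j := (j < s)%nat /\ gfun p w e j x < 0.
Definition ZI p s w e x j := (j < s)%nat /\ gfun p w e j x = 0.
Definition PI p s w e x j := (j < s)%nat /\ gfun p w e j x > 0.

Definition same_index_sets p r s v d w e (x y : vec) : Prop :=
  forall i j,
    (NE p r v d x i <-> NE p r v d y i) /\ (ZE p r v d x i <-> ZE p r v d y i) /\
    (PE p r v d x i <-> PE p r v d y i) /\
    (NI p s w e x j <-> NI p s w e y j) /\ (ZI p s w e x j <-> ZI p s w e y j) /\
    (PI p s w e x j <-> PI p s w e y j).

Definition is_zero (a : R) : bool := if Req_EM_T a 0 then true else false.

(* rows of U_Z: v_i (i in Z_E, increasing), then w_j (j in Z_I, increasing) *)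
Definition Zrows p r s v d w e (x : vec) : list vec :=
  map v (filter (fun i => is_zero (gfun p v d i x)) (seq 0 r)) ++
  map w (filter (fun j => is_zero (gfun p w e j x)) (seq 0 s)).

Definition zero_vec : vec := fun _ => 0.
Definition rows_mat (rows : list vec) : mat := fun k l => nth k rows zero_vec l.

Definition rows_lin_indep (p : nat) (rows : list vec) : Prop :=
  forall c : nat -> R,
    (forall l, (l < p)%nat ->
       fsum (length rows) (fun k => c k * nth k rows zero_vec l) = 0) ->
    forall k, (k < length rows)%nat -> c k = 0.

Definition ubarZ p r s v d w e (x : vec) : vec :=
  fun l =>
    fsum r (fun i => if Rlt_dec (gfun p v d i x) 0 then - v i l
                     else if Rlt_dec 0 (gfun p v d i x) then v i l else 0)
  + fsum s (fun j => if Rlt_dec 0 (gfun p w e j x) then w j l else 0).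

(* P(x) = H^-1 - H^-1 U^t [U H^-1 U^t]^-1 U H^-1, with H = Hs x, U = U_Z(x) *)
Definition Pmat p r s v d w e (Hs : vec -> mat) (x : vec) : mat :=
  let U := rows_mat (Zrows p r s v d w e x) in
  let m := length (Zrows p r s v d w e x) in
  let Hi := minv p (Hs x) in
  let HiUt := mmul p Hi (transp U) in
  let M := mmul p U HiUt in
  fun i j => Hi i j - mmul m (mmul m HiUt (minv m M)) (mmul p U Hi) i j.

(* Main.v *)
Require Import Defs.
From Stdlib Require Import Reals Lra Lia FunctionalExtensionality List.
Open Scope R_scope.

Lemma fsum_ext n f g : (forall i, (i < n)%nat -> f i = g i) -> fsum n f = fsum n g.
Proof.
induction n as [|n IH]; intros H; simpl; [reflexivity|].
rewrite IH by (intros; apply H; lia). rewrite H by lia. reflexivity.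
Qed.

Lemma fsum_plus n f g : fsum n (fun i => f i + g i) = fsum n f + fsum n g.
Proof. induction n as [|n IH]; simpl; [lra|]. rewrite IH; lra. Qed.

Lemma fsum_scal n c f : fsum n (fun i => c * f i) = c * fsum n f.
Proof. induction n as [|n IH]; simpl; [lra|]. rewrite IH; lra. Qed.

Lemma fsum_zero n : fsum n (fun _ => 0) = 0.
Proof. induction n as [|n IH]; simpl; [lra|]. rewrite IH; lra. Qed.

Lemma fsum_swap n m F :
  fsum n (fun i => fsum m (fun j => F i j)) = fsum m (fun j => fsum n (fun i => F i j)).
Proof.
induction n as [|n IH]; simpl.
- rewrite fsum_zero; reflexivity.
- rewrite IH, <- fsum_plus; reflexivity.
Qed.

Lemma fsum_le n f g : (forall i, (i < n)%nat -> f i <= g i) -> fsum n f <= fsum n g.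
Proof.
induction n as [|n IH]; intros H; simpl; [lra|].
assert (fsum n f <= fsum n g) by (apply IH; intros; apply H; lia).
assert (f n <= g n) by (apply H; lia). lra.
Qed.

Lemma fsum_abs n f : Rabs (fsum n f) <= fsum n (fun i => Rabs (f i)).
Proof.
induction n as [|n IH]; simpl.
- rewrite Rabs_R0; lra.
- eapply Rle_trans; [apply Rabs_triang|]. lra.
Qed.

Lemma fsum_nonneg n f : (forall i, (i < n)%nat -> 0 <= f i) -> 0 <= fsum n f.
Proof.
intros H. rewrite <- (fsum_zero n). apply fsum_le. exact H.
Qed.

Lemma fsum_term_le n f k : (forall i, (i < n)%nat -> 0 <= f i) -> (k < n)%nat -> f k <= fsum n f.
Proof.
induction n as [|n IH]; intros H Hk; [lia|]. simpl.
destruct (Nat.eq_dec k n) as [->|ne].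
- assert (0 <= fsum n f) by (apply fsum_nonneg; intros; apply H; lia). lra.
- assert (f k <= fsum n f) by (apply IH; [intros; apply H; lia| lia]).
  assert (0 <= f n) by (apply H; lia). lra.
Qed.

Lemma dot_lin p a x t h : dot p a (vadd x (vscale t h)) = dot p a x + t * dot p a h.
Proof.
unfold dot, vadd, vscale. rewrite <- fsum_scal, <- fsum_plus.
apply fsum_ext; intros; ring.
Qed.

Lemma dot_sub p a x y : dot p a (vsub x y) = dot p a x - dot p a y.
Proof.
unfold dot, vsub. replace (fsum p (fun i => a i * x i) - fsum p (fun i => a i * y i))
  with (fsum p (fun i => a i * x i) + (-1) * fsum p (fun i => a i * y i)) by ring.
rewrite <- fsum_scal, <- fsum_plus. apply fsum_ext; intros; ring.
Qed.

Lemma dot_self_nonneg p h : 0 <= dot p h h.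
Proof. apply fsum_nonneg; intros; nra. Qed.

Lemma vnorm_nonneg p h : 0 <= vnorm p h.
Proof. apply sqrt_pos. Qed.

Lemma vnorm_scale p t h : vnorm p (vscale t h) = Rabs t * vnorm p h.
Proof.
unfold vnorm. replace (dot p (vscale t h) (vscale t h)) with (Rsqr t * dot p h h).
- rewrite sqrt_mult_alt by apply Rle_0_sqr. rewrite sqrt_Rsqr_abs. reflexivity.
- unfold dot, vscale, Rsqr. rewrite <- fsum_scal. apply fsum_ext; intros; ring.
Qed.

Lemma coord_le_vnorm p y l : (l < p)%nat -> Rabs (y l) <= vnorm p y.
Proof.
intros Hl. unfold vnorm. rewrite <- sqrt_Rsqr_abs. apply sqrt_le_1_alt.
unfold Rsqr. apply (fsum_term_le p (fun i => y i * y i)); [intros; nra | exact Hl].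
Qed.

Lemma vnorm_le_sum p y : vnorm p y <= fsum p (fun l => Rabs (y l)).
Proof.
unfold vnorm.
assert (Hs : 0 <= fsum p (fun l => Rabs (y l))) by (apply fsum_nonneg; intros; apply Rabs_pos).
rewrite <- (sqrt_Rsqr (fsum p (fun l => Rabs (y l)))) by exact Hs.
apply sqrt_le_1_alt. unfold dot, Rsqr.
clear Hs. induction p as [|p IH]; simpl; [lra|].
assert (0 <= fsum p (fun l => Rabs (y l))) by (apply fsum_nonneg; intros; apply Rabs_pos).
assert (Rabs (y p) * Rabs (y p) = y p * y p) by (rewrite <- Rabs_mult; apply Rabs_pos_eq; nra).
assert (0 <= Rabs (y p)) by apply Rabs_pos.
nra.
Qed.

Lemma nbhd_all n (P : nat -> R -> Prop) :
  (forall k, (k < n)%nat -> exists del, 0 < del /\ forall t, Rabs t < del -> P k t) ->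
  exists del, 0 < del /\ forall t, Rabs t < del -> forall k, (k < n)%nat -> P k t.
Proof.
induction n as [|n IH]; intros H.
- exists 1; split; [lra| intros; lia].
- destruct IH as [d1 [Hd1 H1]]; [intros; apply H; lia|].
  destruct (H n) as [d2 [Hd2 H2]]; [lia|].
  exists (Rmin d1 d2); split; [apply Rmin_pos; lra|].
  intros t Ht k Hk.
  assert (Rabs t < d1) by (eapply Rlt_le_trans; [exact Ht| apply Rmin_l]).
  assert (Rabs t < d2) by (eapply Rlt_le_trans; [exact Ht| apply Rmin_r]).
  destruct (Nat.eq_dec k n) as [->|ne]; [apply H2; auto| apply H1; auto; lia].
Qed.

Definition sg (g : R) : R := if Rlt_dec g 0 then -1 else if Rlt_dec 0 g then 1 else 0.
Definition pos (g : R) : R := if Rlt_dec 0 g then 1 else 0.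

Lemma small_prod g a t : Rabs t < Rabs g / (Rabs a + 1) -> Rabs (t * a) < Rabs g.
Proof.
intros Ht. rewrite Rabs_mult.
assert (0 <= Rabs a) by apply Rabs_pos. assert (0 <= Rabs t) by apply Rabs_pos.
assert (Rabs t * (Rabs a + 1) < Rabs g).
{ apply (Rmult_lt_compat_r (Rabs a + 1)) in Ht; [|lra].
  unfold Rdiv in Ht. rewrite Rmult_assoc, Rinv_l in Ht by lra. lra. }
nra.
Qed.

Lemma abs_local g a : (g = 0 -> a = 0) -> exists del, 0 < del /\ forall t, Rabs t < del ->
  Rabs (g + t * a) = Rabs g + t * (sg g * a).
Proof.
intros Hz. unfold sg. destruct (Rlt_dec g 0) as [Hn|Hn].
- exists (Rabs g / (Rabs a + 1)). split.
  + apply Rdiv_lt_0_compat; [apply Rabs_pos_lt; lra| assert (0 <= Rabs a) by apply Rabs_pos; lra].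
  + intros t Ht. apply small_prod in Ht. rewrite (Rabs_left g) in Ht by lra.
    assert (t * a < - g) by (eapply Rle_lt_trans; [apply RRle_abs| exact Ht]).
    rewrite !Rabs_left by lra. ring.
- destruct (Rlt_dec 0 g) as [Hp|Hp].
  + exists (Rabs g / (Rabs a + 1)). split.
    * apply Rdiv_lt_0_compat; [apply Rabs_pos_lt; lra| assert (0 <= Rabs a) by apply Rabs_pos; lra].
    * intros t Ht. apply small_prod in Ht. rewrite (Rabs_right g) in Ht by lra.
      assert (- (t * a) < g) by (eapply Rle_lt_trans; [apply Rle_abs| rewrite Rabs_Ropp; exact Ht]).
      rewrite !Rabs_right by lra. ring.
  + assert (g = 0) by lra. rewrite (Hz H). exists 1; split; [lra|].
    intros t _. replace (g + t * 0) with g by ring. ring.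
Qed.

Lemma max_local g a : (g = 0 -> a = 0) -> exists del, 0 < del /\ forall t, Rabs t < del ->
  Rmax 0 (g + t * a) = Rmax 0 g + t * (pos g * a).
Proof.
intros Hz. unfold pos. destruct (Rlt_dec 0 g) as [Hp|Hp].
- exists (Rabs g / (Rabs a + 1)). split.
  + apply Rdiv_lt_0_compat; [apply Rabs_pos_lt; lra| assert (0 <= Rabs a) by apply Rabs_pos; lra].
  + intros t Ht. apply small_prod in Ht. rewrite (Rabs_right g) in Ht by lra.
    assert (- (t * a) < g) by (eapply Rle_lt_trans; [apply Rle_abs| rewrite Rabs_Ropp; exact Ht]).
    rewrite !Rmax_right by lra. ring.
- destruct (Req_dec g 0) as [Hg|Hg].
  + rewrite (Hz Hg). exists 1; split; [lra|]. intros t _.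
    replace (g + t * 0) with g by ring. ring.
  + exists (Rabs g / (Rabs a + 1)). split.
    * apply Rdiv_lt_0_compat; [apply Rabs_pos_lt; lra| assert (0 <= Rabs a) by apply Rabs_pos; lra].
    * intros t Ht. apply small_prod in Ht. rewrite (Rabs_left g) in Ht by lra.
      assert (t * a < - g) by (eapply Rle_lt_trans; [apply RRle_abs| exact Ht]).
      rewrite !Rmax_left by lra. ring.
Qed.

Lemma fsum_mul_r n f c : fsum n f * c = fsum n (fun i => f i * c).
Proof. induction n as [|n IH]; simpl; [lra|]. rewrite <- IH; ring. Qed.

Lemma gfun_lin p v d i x t h :
  gfun p v d i (vadd x (vscale t h)) = gfun p v d i x + t * dot p (v i) h.
Proof. unfold gfun. rewrite dot_lin. ring. Qed.

Lemma ubar_dot p r s v d w e x h :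
  dot p (ubarZ p r s v d w e x) h =
  fsum r (fun i => sg (gfun p v d i x) * dot p (v i) h) +
  fsum s (fun j => pos (gfun p w e j x) * dot p (w j) h).
Proof.
unfold dot, ubarZ.
transitivity (fsum p (fun l => fsum r (fun i => sg (gfun p v d i x) * (v i l * h l)) +
                               fsum s (fun j => pos (gfun p w e j x) * (w j l * h l)))).
- apply fsum_ext; intros l _. rewrite Rmult_plus_distr_r, !fsum_mul_r. f_equal.
  + apply fsum_ext; intros i _. unfold sg.
    destruct (Rlt_dec (gfun p v d i x) 0); [ring|]. destruct (Rlt_dec 0 (gfun p v d i x)); ring.
  + apply fsum_ext; intros j _. unfold pos. destruct (Rlt_dec 0 (gfun p w e j x)); ring.
- rewrite fsum_plus, (fsum_swap p r), (fsum_swap p s). f_equal; apply fsum_ext; intros; rewrite fsum_scal; reflexivity.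
Qed.

Lemma zero_of_small c N : 0 <= N -> (forall eps, 0 < eps -> Rabs c <= eps * N) -> c = 0.
Proof.
intros HN H. destruct (Req_dec c 0) as [|Hc]; [assumption|].
assert (Ha : 0 < Rabs c) by (apply Rabs_pos_lt; exact Hc).
specialize (H (Rabs c / (2 * (N + 1)))).
assert (0 < Rabs c / (2 * (N + 1))) by (apply Rdiv_lt_0_compat; lra).
specialize (H H0).
assert (Rabs c / (2 * (N + 1)) * N < Rabs c).
{ unfold Rdiv. replace (Rabs c * / (2 * (N + 1)) * N) with (Rabs c * (N / (2 * (N + 1)))) by (unfold Rdiv; ring).
  assert (N / (2 * (N + 1)) < 1).
  { apply (Rmult_lt_reg_r (2 * (N + 1))); [lra|]. unfold Rdiv. rewrite Rmult_assoc, Rinv_l by lra. lra. }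
  nra. }
lra.
Qed.

Lemma kkt p r s f v d w e (g : vec) rho x :
  (forall y, Epen p r s f v d w e rho x <= Epen p r s f v d w e rho y) ->
  frechet_at p f x g ->
  forall h, (forall i, (i < r)%nat -> gfun p v d i x = 0 -> dot p (v i) h = 0) ->
            (forall j, (j < s)%nat -> gfun p w e j x = 0 -> dot p (w j) h = 0) ->
  dot p g h + rho * dot p (ubarZ p r s v d w e x) h = 0.
Proof.
intros Hmin Hf h Hv Hw.
destruct (nbhd_all r (fun i t => Rabs (gfun p v d i x + t * dot p (v i) h) =
    Rabs (gfun p v d i x) + t * (sg (gfun p v d i x) * dot p (v i) h))) as [d1 [Hd1 H1]].
{ intros i Hi. apply abs_local. apply Hv; exact Hi. }
destruct (nbhd_all s (fun j t => Rmax 0 (gfun p w e j x + t * dot p (w j) h) =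
    Rmax 0 (gfun p w e j x) + t * (pos (gfun p w e j x) * dot p (w j) h))) as [d2 [Hd2 H2]].
{ intros j Hj. apply max_local. apply Hw; exact Hj. }
set (D := fsum r (fun i => sg (gfun p v d i x) * dot p (v i) h) +
          fsum s (fun j => pos (gfun p w e j x) * dot p (w j) h)).
assert (HE : forall t, Rabs t < Rmin d1 d2 ->
  Epen p r s f v d w e rho (vadd x (vscale t h)) - Epen p r s f v d w e rho x =
  f (vadd x (vscale t h)) - f x + t * (rho * D)).
{ intros t Ht.
  assert (Rabs t < d1) by (eapply Rlt_le_trans; [exact Ht| apply Rmin_l]).
  assert (Rabs t < d2) by (eapply Rlt_le_trans; [exact Ht| apply Rmin_r]).
  unfold Epen.
  rewrite (fsum_ext r (fun i => Rabs (gfun p v d i (vadd x (vscale t h))))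
     (fun i => Rabs (gfun p v d i x) + t * (sg (gfun p v d i x) * dot p (v i) h))).
  2:{ intros i Hi. rewrite gfun_lin. apply H1; assumption. }
  rewrite (fsum_ext s (fun j => Rmax 0 (gfun p w e j (vadd x (vscale t h)))) 
     (fun j => Rmax 0 (gfun p w e j x) + t * (pos (gfun p w e j x) * dot p (w j) h))).
  2:{ intros j Hj. rewrite gfun_lin. apply H2; assumption. }
  rewrite !fsum_plus, !fsum_scal. unfold D. ring. }
rewrite ubar_dot. fold D.
set (N := vnorm p h). assert (HN : 0 <= N) by apply vnorm_nonneg.
apply (zero_of_small _ N HN). intros eps Heps.
destruct (Hf eps Heps) as [d3 [Hd3 H3]].
set (t := Rmin (Rmin d1 d2) (d3 / (N + 1)) / 2).
assert (Hm : 0 < Rmin d1 d2) by (apply Rmin_pos; lra).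
assert (Hq : 0 < d3 / (N + 1)) by (apply Rdiv_lt_0_compat; lra).
assert (Ht0 : 0 < t) by (unfold t; assert (0 < Rmin (Rmin d1 d2) (d3 / (N + 1))) by (apply Rmin_pos; lra); lra).
assert (Ht1 : t < Rmin d1 d2).
{ unfold t. assert (Rmin (Rmin d1 d2) (d3 / (N + 1)) <= Rmin d1 d2) by apply Rmin_l. lra. }
assert (Ht2 : t * N < d3).
{ assert (t < d3 / (N + 1)).
  { unfold t. assert (Rmin (Rmin d1 d2) (d3 / (N + 1)) <= d3 / (N + 1)) by apply Rmin_r. lra. }
  assert (t * (N + 1) < d3).
  { apply (Rmult_lt_compat_r (N + 1)) in H; [|lra]. unfold Rdiv in H.
    rewrite Rmult_assoc, Rinv_l in H by lra. lra. }
  nra. }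
assert (key : forall tau, Rabs tau = t -> 0 <= tau * (dot p g h + rho * D) + eps * (t * N)).
{ intros tau Htau.
  assert (Hle := Hmin (vadd x (vscale tau h))).
  rewrite <- Htau in Ht1. specialize (HE tau Ht1).
  assert (Hn : vnorm p (vscale tau h) = t * N) by (rewrite vnorm_scale, Htau; reflexivity).
  assert (Hf3 := H3 (vscale tau h)). rewrite Hn in Hf3. specialize (Hf3 Ht2).
  assert (Hdl : dot p g (vscale tau h) = tau * dot p g h).
  { unfold dot, vscale. rewrite <- fsum_scal. apply fsum_ext; intros; ring. }
  rewrite Hdl in Hf3.
  set (z := f (vadd x (vscale tau h)) - f x - tau * dot p g h) in Hf3.
  assert (Hz : z <= Rabs z) by apply Rle_abs.
  unfold z in Hz, Hf3. lra. }
assert (k1 := key t (Rabs_right t ltac:(lra))).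
assert (k2 := key (- t) ltac:(rewrite Rabs_Ropp; apply Rabs_right; lra)).
set (c := dot p g h + rho * D) in *.
apply Rabs_le. split.
- apply (Rmult_le_reg_l t); [lra|]. lra.
- apply (Rmult_le_reg_l t); [lra|]. lra.
Qed.

Lemma is_zero_true a : a = 0 -> is_zero a = true.
Proof. intros ->. unfold is_zero. destruct (Req_EM_T 0 0); [reflexivity| congruence]. Qed.

Lemma is_zero_eq a : is_zero a = true -> a = 0.
Proof. unfold is_zero. destruct (Req_EM_T a 0); [auto| discriminate]. Qed.

Lemma Zrows_same p r s v d w e x y :
  same_index_sets p r s v d w e x y -> Zrows p r s v d w e x = Zrows p r s v d w e y.
Proof.
intros HS. unfold Zrows. f_equal; f_equal; apply filter_ext_in; intros a Ha;
  apply in_seq in Ha; destruct (HS a a) as (H1 & H2 & H3 & H4 & H5 & H6).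
- unfold ZE in H2. unfold is_zero.
  destruct (Req_EM_T (gfun p v d a x) 0) as [e1|e1]; destruct (Req_EM_T (gfun p v d a y) 0) as [e2|e2];
   try reflexivity; exfalso.
  + apply e2, (proj1 H2); split; [lia| exact e1].
  + apply e1, (proj2 H2); split; [lia| exact e2].
- unfold ZI in H5. unfold is_zero.
  destruct (Req_EM_T (gfun p w e a x) 0) as [e1|e1]; destruct (Req_EM_T (gfun p w e a y) 0) as [e2|e2];
   try reflexivity; exfalso.
  + apply e2, (proj1 H5); split; [lia| exact e1].
  + apply e1, (proj2 H5); split; [lia| exact e2].
Qed.

Lemma ubar_same p r s v d w e x y :
  same_index_sets p r s v d w e x y -> ubarZ p r s v d w e x = ubarZ p r s v d w e y.
Proof.
intros HS. apply functional_extensionality; intros l. unfold ubarZ. f_equal; apply fsum_ext; intros a Ha;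
  destruct (HS a a) as (H1 & H2 & H3 & H4 & H5 & H6).
- unfold NE, PE in *.
  destruct (Rlt_dec (gfun p v d a x) 0) as [n1|n1]; destruct (Rlt_dec (gfun p v d a y) 0) as [n2|n2].
  + reflexivity.
  + exfalso; apply n2, (proj1 H1); split; assumption.
  + exfalso; apply n1, (proj2 H1); split; assumption.
  + destruct (Rlt_dec 0 (gfun p v d a x)) as [q1|q1]; destruct (Rlt_dec 0 (gfun p v d a y)) as [q2|q2];
      try reflexivity; exfalso.
    * apply q2, (proj1 H3); split; assumption.
    * apply q1, (proj2 H3); split; assumption.
- unfold PI in *.
  destruct (Rlt_dec 0 (gfun p w e a x)) as [q1|q1]; destruct (Rlt_dec 0 (gfun p w e a y)) as [q2|q2];
    try reflexivity; exfalso.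
  + apply q2, (proj1 H6); split; assumption.
  + apply q1, (proj2 H6); split; assumption.
Qed.

Lemma Z_member_inv p r s v d w e x k :
  (k < length (Zrows p r s v d w e x))%nat ->
  (exists i, (i < r)%nat /\ gfun p v d i x = 0 /\ nth k (Zrows p r s v d w e x) zero_vec = v i) \/
  (exists j, (j < s)%nat /\ gfun p w e j x = 0 /\ nth k (Zrows p r s v d w e x) zero_vec = w j).
Proof.
intros Hk. assert (Hin := nth_In (Zrows p r s v d w e x) zero_vec Hk).
set (z := nth k (Zrows p r s v d w e x) zero_vec) in *. clearbody z.
unfold Zrows in Hin. apply in_app_or in Hin. destruct Hin as [Hin|Hin];
  apply in_map_iff in Hin; destruct Hin as [a [Ha Hin]]; apply filter_In in Hin;
  destruct Hin as [Hin Hz]; apply in_seq in Hin; apply is_zero_eq in Hz.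
- left. exists a. repeat split; [lia| exact Hz| symmetry; exact Ha].
- right. exists a. repeat split; [lia| exact Hz| symmetry; exact Ha].
Qed.

Lemma Z_member_v p r s v d w e x i : (i < r)%nat -> gfun p v d i x = 0 ->
  exists k, (k < length (Zrows p r s v d w e x))%nat /\ nth k (Zrows p r s v d w e x) zero_vec = v i.
Proof.
intros Hi Hz. apply In_nth. unfold Zrows. apply in_or_app. left. apply in_map.
apply filter_In. split; [apply in_seq; lia| apply is_zero_true; exact Hz].
Qed.

Lemma Z_member_w p r s v d w e x j : (j < s)%nat -> gfun p w e j x = 0 ->
  exists k, (k < length (Zrows p r s v d w e x))%nat /\ nth k (Zrows p r s v d w e x) zero_vec = w j.
Proof.
intros Hj Hz. apply In_nth. unfold Zrows. apply in_or_app. right. apply in_map.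
apply filter_In. split; [apply in_seq; lia| apply is_zero_true; exact Hz].
Qed.

Lemma cont_unfold g a : continuity_pt g a ->
  forall eps, 0 < eps -> exists alp, 0 < alp /\ forall t, Rabs (t - a) < alp -> Rabs (g t - g a) < eps.
Proof.
intros Hc eps He. destruct (Hc eps He) as [alp [Ha H]]. exists alp; split; [exact Ha|].
intros t Ht. destruct (Req_dec t a) as [->|ne].
- unfold Rminus. rewrite Rplus_opp_r, Rabs_R0. exact He.
- apply (H t). split; [split; [exact I| auto]| exact Ht].
Qed.

Lemma fsum_const_le n f c : (forall i, (i < n)%nat -> f i <= c) -> fsum n f <= INR n * c.
Proof.
induction n as [|n IH]; intros H; [simpl; lra|].
rewrite S_INR. cbn [fsum].
assert (fsum n f <= INR n * c) by (apply IH; intros; apply H; lia).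
assert (f n <= c) by (apply H; lia). lra.
Qed.

Lemma fsum_minus n f g : fsum n (fun i => f i - g i) = fsum n f - fsum n g.
Proof. induction n as [|n IH]; simpl; [lra|]. rewrite IH; lra. Qed.

Lemma main_raw
  (p r s : nat) (f : vec -> R)
  (v : nat -> vec) (d : nat -> R) (w : nat -> vec) (e : nat -> R)
  (G : vec -> vec) (Hs : vec -> mat)
  (f_grad : forall x, frechet_at p f x (G x))
  (f_hess : forall x i, (i < p)%nat -> frechet_at p (fun y => G y i) x (Hs x i))
  (I : R -> Prop)
  (I_open : forall rho, I rho -> exists delta, 0 < delta /\
      forall t, Rabs (t - rho) < delta -> I t)
  (xr : R -> vec)
  (x_min : forall rho, I rho -> forall y : vec,
      Epen p r s f v d w e rho (xr rho) <= Epen p r s f v d w e rho y)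
  (x_cont : forall rho, I rho -> forall i, (i < p)%nat ->
      continuity_pt (fun t => xr t i) rho)
  (x_sets : forall rho1 rho2, I rho1 -> I rho2 ->
      same_index_sets p r s v d w e (xr rho1) (xr rho2))
  (U_indep : forall rho, I rho ->
      rows_lin_indep p (Zrows p r s v d w e (xr rho)))
  (LA : forall x, rows_lin_indep p (Zrows p r s v d w e x) ->
     (forall j k, (j < p)%nat -> (k < length (Zrows p r s v d w e x))%nat ->
        fsum p (fun l => Pmat p r s v d w e Hs x j l * rows_mat (Zrows p r s v d w e x) k l) = 0) /\
     (forall D : vec, (forall k, (k < length (Zrows p r s v d w e x))%nat ->
        fsum p (fun l => rows_mat (Zrows p r s v d w e x) k l * D l) = 0) ->
      forall j, (j < p)%nat ->
        fsum p (fun l => Pmat p r s v d w e Hs x j l * fsum p (fun q => Hs x l q * D q)) = D j)) :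
  forall rho, I rho -> forall i, (i < p)%nat ->
    derivable_pt_lim (fun t => xr t i) rho
      (- mvec p (Pmat p r s v d w e Hs (xr rho)) (ubarZ p r s v d w e (xr rho)) i).
Proof.
intros rho0 Hr0 i Hi.
destruct (LA (xr rho0) (U_indep rho0 Hr0)) as [PU PH].
set (x0 := xr rho0) in *.
set (Z := Zrows p r s v d w e x0) in *.
set (P := Pmat p r s v d w e Hs x0) in *.
set (u := ubarZ p r s v d w e x0) in *.
set (H0 := Hs x0) in *.
assert (KK : forall rho, I rho -> forall j, (j < p)%nat ->
   fsum p (fun l => G (xr rho) l * P j l) + rho * fsum p (fun l => u l * P j l) = 0).
{ intros rho Hr j Hj. assert (HS := x_sets rho rho0 Hr Hr0).
  replace u with (ubarZ p r s v d w e (xr rho)) by exact (ubar_same _ _ _ _ _ _ _ _ _ HS).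
  apply (kkt p r s f v d w e (G (xr rho)) rho (xr rho) (x_min rho Hr) (f_grad _) (fun l => P j l)).
  - intros a Ha Hz.
    assert (Hz0 : gfun p v d a x0 = 0).
    { destruct (HS a a) as (_ & H2 & _). apply (proj1 H2). split; assumption. }
    destruct (Z_member_v p r s v d w e x0 a Ha Hz0) as [k [Hk Hn]].
    unfold dot. rewrite <- Hn.
    transitivity (fsum p (fun l => P j l * rows_mat Z k l)).
    + apply fsum_ext; intros; unfold rows_mat, Z; ring.
    + apply PU; assumption.
  - intros a Ha Hz.
    assert (Hz0 : gfun p w e a x0 = 0).
    { destruct (HS a a) as (_ & _ & _ & _ & H5 & _). apply (proj1 H5). split; assumption. }
    destruct (Z_member_w p r s v d w e x0 a Ha Hz0) as [k [Hk Hn]].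
    unfold dot. rewrite <- Hn.
    transitivity (fsum p (fun l => P j l * rows_mat Z k l)).
    + apply fsum_ext; intros; unfold rows_mat, Z; ring.
    + apply PU; assumption. }
assert (UD : forall rho, I rho -> forall k, (k < length Z)%nat ->
   fsum p (fun l => rows_mat Z k l * vsub (xr rho) x0 l) = 0).
{ intros rho Hr k Hk. assert (HS := x_sets rho rho0 Hr Hr0).
  destruct (Z_member_inv p r s v d w e x0 k Hk) as [[a [Ha [Hz Hn]]]|[a [Ha [Hz Hn]]]].
  - unfold rows_mat. fold Z in Hn. rewrite Hn.
    assert (Hz1 : gfun p v d a (xr rho) = 0).
    { destruct (HS a a) as (_ & H2 & _). apply (proj2 H2). split; assumption. }
    change (dot p (v a) (vsub (xr rho) x0) = 0). rewrite dot_sub.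
    unfold gfun in Hz, Hz1. lra.
  - unfold rows_mat. fold Z in Hn. rewrite Hn.
    assert (Hz1 : gfun p w e a (xr rho) = 0).
    { destruct (HS a a) as (_ & _ & _ & _ & H5 & _). apply (proj2 H5). split; assumption. }
    change (dot p (w a) (vsub (xr rho) x0) = 0). rewrite dot_sub.
    unfold gfun in Hz, Hz1. lra. }
set (E := fun rho l => G (xr rho) l - G x0 l - fsum p (fun q => H0 l q * vsub (xr rho) x0 q)).
assert (ID : forall rho, I rho -> forall j, (j < p)%nat ->
   vsub (xr rho) x0 j + fsum p (fun l => P j l * E rho l) + (rho - rho0) * fsum p (fun l => P j l * u l) = 0).
{ intros rho Hr j Hj.
  rewrite <- (PH (vsub (xr rho) x0) (UD rho Hr) j Hj).
  assert (A := KK rho Hr j Hj). assert (B := KK rho0 Hr0 j Hj). fold x0 in B.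
  rewrite <- fsum_scal, <- fsum_plus in A, B.
  rewrite <- fsum_scal, <- !fsum_plus.
  transitivity (fsum p (fun l => (G (xr rho) l * P j l + rho * (u l * P j l)) -
                                 (G x0 l * P j l + rho0 * (u l * P j l)))).
  - apply fsum_ext; intros l _. unfold E. ring.
  - rewrite fsum_minus, A, B. ring. }
set (K := fsum p (fun j => Rabs (fsum p (fun l => P j l * u l)))).
set (Cc := fsum p (fun j => fsum p (fun l => Rabs (P j l)))).
assert (HK : 0 <= K) by (apply fsum_nonneg; intros; apply Rabs_pos).
assert (HC : 0 <= Cc) by (apply fsum_nonneg; intros; apply fsum_nonneg; intros; apply Rabs_pos).
intros eps Heps.
set (eps1 := Rmin (/ (2 * (Cc + 1))) (eps / (2 * Cc * K + 1))).
assert (He1a : 0 < / (2 * (Cc + 1))) by (apply Rinv_0_lt_compat; lra).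
assert (He1b : 0 < eps / (2 * Cc * K + 1)) by (apply Rdiv_lt_0_compat; nra).
assert (He1 : 0 < eps1) by (apply Rmin_pos; assumption).
assert (HCe : Cc * eps1 <= 1 / 2).
{ assert (eps1 <= / (2 * (Cc + 1))) by apply Rmin_l.
  assert (Cc * / (2 * (Cc + 1)) <= 1/2).
  { apply (Rmult_le_reg_r (2 * (Cc + 1))); [lra|]. rewrite Rmult_assoc, Rinv_l by lra. lra. }
  nra. }
assert (HKe : 2 * Cc * K * eps1 < eps).
{ assert (eps1 <= eps / (2 * Cc * K + 1)) by apply Rmin_r.
  assert (2 * Cc * K * (eps / (2 * Cc * K + 1)) < eps).
  { apply (Rmult_lt_reg_r (2 * Cc * K + 1)); [nra|].
    replace (2 * Cc * K * (eps / (2 * Cc * K + 1)) * (2 * Cc * K + 1)) with (2 * Cc * K * eps)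
      by (field; nra). nra. }
  assert (0 <= 2 * Cc * K) by nra. nra. }
destruct (nbhd_all p (fun l t => forall h, vnorm p h = Rabs t ->
   Rabs (G (vadd x0 h) l - G x0 l - dot p (Hs x0 l) h) <= eps1 * vnorm p h)) as [dG [HdG HG]].
{ intros l Hl. destruct (f_hess x0 l Hl eps1 He1) as [dl [Hdl Hl']].
  exists dl; split; [exact Hdl|]. intros t Ht h Hh. apply Hl'. rewrite Hh; exact Ht. }
assert (Hp1 : 0 < INR p + 1) by (assert (0 <= INR p) by apply pos_INR; lra).
assert (HdGp : 0 < dG / (INR p + 1)) by (apply Rdiv_lt_0_compat; lra).
destruct (nbhd_all p (fun j t => Rabs (xr (rho0 + t) j - x0 j) < dG / (INR p + 1))) as [dc [Hdc Hc]].
{ intros j Hj. destruct (cont_unfold _ _ (x_cont rho0 Hr0 j Hj) _ HdGp) as [alp [Ha Hal]].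
  exists alp; split; [exact Ha|]. intros t Ht.
  specialize (Hal (rho0 + t)). cbv beta in Hal. apply Hal.
  replace (rho0 + t - rho0) with t by ring. exact Ht. }
destruct (I_open rho0 Hr0) as [dI [HdI HI]].
assert (Hpos : 0 < Rmin dc dI) by (apply Rmin_pos; assumption).
exists (mkposreal _ Hpos). intros h Hh0 Hh. simpl in Hh.
assert (Hhc : Rabs h < dc) by (eapply Rlt_le_trans; [exact Hh| apply Rmin_l]).
assert (Hhi : Rabs h < dI) by (eapply Rlt_le_trans; [exact Hh| apply Rmin_r]).
assert (Ih : I (rho0 + h)) by (apply HI; replace (rho0 + h - rho0) with h by ring; exact Hhi).
set (x := xr (rho0 + h)) in *.
set (Dl := vsub x x0).
set (N := vnorm p Dl).
assert (HN0 : 0 <= N) by apply vnorm_nonneg.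
assert (HN : N < dG).
{ apply (Rle_lt_trans _ (fsum p (fun l => Rabs (Dl l)))); [apply vnorm_le_sum|].
  apply (Rle_lt_trans _ (INR p * (dG / (INR p + 1)))).
  - apply fsum_const_le. intros j Hj. left. apply (Hc h Hhc j Hj).
  - apply (Rmult_lt_reg_r (INR p + 1)); [lra|].
    replace (INR p * (dG / (INR p + 1)) * (INR p + 1)) with (INR p * dG) by (field; lra). nra. }
assert (Hvx : vadd x0 Dl = x).
{ apply functional_extensionality; intros q. unfold vadd, Dl, vsub. ring. }
assert (HE : forall l, (l < p)%nat -> Rabs (E (rho0 + h) l) <= eps1 * N).
{ intros l Hl. assert (HNa : Rabs N < dG) by (rewrite Rabs_right by lra; exact HN).
  assert (Hb := HG N HNa l Hl Dl (eq_sym (Rabs_right N ltac:(lra)))).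
  rewrite Hvx in Hb. exact Hb. }
assert (HPe : forall j, (j < p)%nat -> Rabs (fsum p (fun l => P j l * E (rho0 + h) l)) <=
                          fsum p (fun l => Rabs (P j l)) * (eps1 * N)).
{ intros j Hj. eapply Rle_trans; [apply fsum_abs|]. rewrite fsum_mul_r. apply fsum_le.
  intros l Hl. rewrite Rabs_mult. apply Rmult_le_compat_l; [apply Rabs_pos| apply HE; exact Hl]. }
assert (IDh : forall j, (j < p)%nat ->
   Dl j + fsum p (fun l => P j l * E (rho0 + h) l) + h * fsum p (fun l => P j l * u l) = 0).
{ intros j Hj. assert (Z1 := ID (rho0 + h) Ih j Hj).
  replace (rho0 + h - rho0) with h in Z1 by ring. exact Z1. }
assert (HNb : N <= Cc * (eps1 * N) + Rabs h * K).
{ apply (Rle_trans _ (fsum p (fun l => Rabs (Dl l)))); [apply vnorm_le_sum|].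
  unfold Cc, K. rewrite fsum_mul_r, <- fsum_scal, <- fsum_plus. apply fsum_le.
  intros j Hj. assert (Hid := IDh j Hj).
  replace (Dl j) with (- (fsum p (fun l => P j l * E (rho0 + h) l)) + - (h * fsum p (fun l => P j l * u l))) by lra.
  eapply Rle_trans; [apply Rabs_triang|]. rewrite !Rabs_Ropp, Rabs_mult.
  assert (Hq := HPe j Hj). lra. }
assert (HN2 : N <= 2 * Rabs h * K).
{ assert (Cc * (eps1 * N) <= 1/2 * N) by nra. lra. }
assert (Hhp : 0 < Rabs h) by (apply Rabs_pos_lt; exact Hh0).
assert (Hid := IDh i Hi).
assert (HPi : Rabs (fsum p (fun l => P i l * E (rho0 + h) l)) <= Cc * (eps1 * N)).
{ eapply Rle_trans; [apply HPe; exact Hi|]. apply Rmult_le_compat_r; [nra|].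
  apply (fsum_term_le p (fun j => fsum p (fun l => Rabs (P j l)))); [|exact Hi].
  intros; apply fsum_nonneg; intros; apply Rabs_pos. }
cbv beta. fold x0 x.
change (mvec p P u i) with (fsum p (fun l => P i l * u l)).
change (x i - x0 i) with (Dl i).
replace (Dl i) with (- fsum p (fun l => P i l * E (rho0 + h) l) - h * fsum p (fun l => P i l * u l)) by lra.
replace ((- fsum p (fun l => P i l * E (rho0 + h) l) - h * fsum p (fun l => P i l * u l)) / h - - fsum p (fun l => P i l * u l))
  with (- (fsum p (fun l => P i l * E (rho0 + h) l)) / h) by (field; exact Hh0).
unfold Rdiv. rewrite Rabs_mult, Rabs_Ropp, Rabs_inv.
apply (Rmult_lt_reg_r (Rabs h)); [exact Hhp|].
rewrite Rmult_assoc, Rinv_l by lra.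
assert (Hb1 : Cc * (eps1 * N) <= Cc * eps1 * (2 * Rabs h * K)).
{ replace (Cc * (eps1 * N)) with ((Cc * eps1) * N) by ring.
  apply Rmult_le_compat_l; [apply Rmult_le_pos; lra| lra]. }
assert (Hb2 : Cc * eps1 * (2 * Rabs h * K) = (2 * Cc * K * eps1) * Rabs h) by ring.
assert (Hb3 : (2 * Cc * K * eps1) * Rabs h < eps * Rabs h) by (apply Rmult_lt_compat_r; lra).
lra.
Qed.

From Stdlib Require Import Reals Lra ClassicalEpsilon.
From mathcomp Require Import all_boot all_algebra.
From mathcomp Require Import Rstruct.
Import GRing.Theory.

Lemma fsum_big n (f : nat -> R) : fsum n f = (\sum_(i < n) f i)%R.
Proof.
elim: n => [|n IH] /=; first by rewrite big_ord0.
by rewrite big_ord_recr /= IH.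
Qed.

Local Open Scope ring_scope.

Definition tM n m (A : mat) : 'M[R]_(n, m) := \matrix_(i < n, j < m) A i j.

Lemma tM_mul n m k A B : tM n m (mmul k A B) = tM n k A *m tM k m B.
Proof.
apply/matrixP => i j; rewrite !mxE /mmul fsum_big.
by apply: eq_bigr => l _; rewrite !mxE.
Qed.

Lemma tM_tr n m A : tM n m (transp A) = (tM m n A)^T.
Proof. by apply/matrixP => i j; rewrite !mxE. Qed.

Definition fromM {n m} (X : 'M[R]_(n, m)) : mat :=
  fun i j => match (insub i : option 'I_n), (insub j : option 'I_m) with
             | Some a, Some b => X a b | _, _ => 0 end.

Lemma fromMK n m (X : 'M[R]_(n, m)) : tM n m (fromM X) = X.
Proof. by apply/matrixP => i j; rewrite !mxE /fromM !valK. Qed.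

Lemma tM_ord {n m} A {i j} (hi : (i < n)%N) (hj : (j < m)%N) :
  A i j = tM n m A (Ordinal hi) (Ordinal hj).
Proof. by rewrite mxE. Qed.

Lemma idm_ord {n i j} (hi : (i < n)%N) (hj : (j < n)%N) :
  idm i j = (1%:M : 'M[R]_n) (Ordinal hi) (Ordinal hj).
Proof.
rewrite mxE /idm; case: Nat.eq_dec => [e|ne] /=.
  by case: eqP => //; case; apply: val_inj => /=.
by case: eqP => // [[]] /ne.
Qed.

Lemma idm_eq n (i j : 'I_n) : idm i j = (i == j)%:R.
Proof.
rewrite /idm; case: Nat.eq_dec => [e|ne] /=.
  by rewrite (_ : i = j) ?eqxx //; apply: val_inj.
by case: eqP => // ij; case: ne; rewrite ij.
Qed.

Lemma is_inverse_tM n A B :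
  is_inverse n A B <-> (tM n n A *m tM n n B = 1%:M /\ tM n n B *m tM n n A = 1%:M).
Proof.
split.
  move=> h; split; apply/matrixP => i j; rewrite -tM_mul !mxE -idm_eq;
    have [||h1 h2] := h i j; try (by apply/ltP); by [].
move=> [h1 h2] i j /ltP hi /ltP hj; split.
  by rewrite (tM_ord _ hi hj) tM_mul h1 -idm_ord.
by rewrite (tM_ord _ hi hj) tM_mul h2 -idm_ord.
Qed.

Lemma minv_tM n A : tM n n A \in unitmx -> tM n n (minv n A) = invmx (tM n n A).
Proof.
move=> uA.
have ex : exists B, is_inverse n A B.
  exists (fromM (invmx (tM n n A))); apply/is_inverse_tM.
  by rewrite fromMK mulmxV // mulVmx.
have := epsilon_spec (inhabits zero_mat) (fun B => is_inverse n A B) ex.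
rewrite -/(minv n A) => /is_inverse_tM [h1 _].
by rewrite -[LHS]mul1mx -(mulVmx uA) -mulmxA h1 mulmx1.
Qed.

Lemma tME n m A (i : 'I_n) (j : 'I_m) : tM n m A i j = A i j.
Proof. by rewrite mxE. Qed.

Definition tC n (y : vec) : 'cV[R]_n := \matrix_(i < n, j < 1) y i.

Lemma tM_mvec n k A y : tC n (mvec k A y) = tM n k A *m tC k y.
Proof.
apply/matrixP => i j; rewrite !mxE /mvec fsum_big.
by apply: eq_bigr => l _; rewrite !mxE.
Qed.

Definition PP p m (U H : mat) : mat :=
  let Hi := minv p H in
  let HiUt := mmul p Hi (transp U) in
  let M := mmul p U HiUt in
  fun i j => (Hi i j - mmul m (mmul m HiUt (minv m M)) (mmul p U Hi) i j)%R.

Section LA.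
Variables (p m : nat) (U H : mat).
Hypothesis pd : forall y : vec, (exists i, (i < p)%coq_nat /\ y i <> R0) ->
      Rlt R0 (dot p y (mvec p H y)).
Hypothesis indep : forall c : nat -> R,
    (forall l, (l < p)%coq_nat -> fsum m (fun k => Rmult (c k) (U k l)) = R0) ->
    forall k, (k < m)%coq_nat -> c k = R0.

Let H' := tM p p H.
Let U' := tM m p U.

Lemma pdM (y : 'cV[R]_p) : (y^T *m H' *m y) = 0 -> y = 0.
Proof.
move=> y0; apply/matrixP => a b; rewrite (ord1 b) mxE.
case: (Req_dec (y a 0) 0) => // ne; exfalso.
pose yv : vec := fun i => match (insub i : option 'I_p) with Some c => y c 0 | None => 0%R end.
have yvE : forall c : 'I_p, yv c = y c 0 by move=> c; rewrite /yv valK.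
have := pd yv.
have -> : dot p yv (mvec p H yv) = (y^T *m H' *m y) 0 0.
  rewrite -mulmxA /dot fsum_big !mxE; apply: eq_bigr => i _.
  rewrite !mxE /mvec fsum_big yvE; congr (_ * _)%R.
  by apply: eq_bigr => l _; rewrite !mxE yvE.
rewrite y0 mxE => h.
have ha : (nat_of_ord a < p)%coq_nat by apply/ltP.
have hy : yv a <> 0%R by rewrite yvE.
exact (Rlt_irrefl R0 (h (ex_intro _ (nat_of_ord a) (conj ha hy)))).
Qed.

Lemma indepM (l : 'rV[R]_m) : l *m U' = 0 -> l = 0.
Proof.
move=> l0; apply/matrixP => a b; rewrite (ord1 a) mxE.
pose c : nat -> R := fun k => match (insub k : option 'I_m) with Some c => l 0 c | None => 0%R end.
have cE : forall k : 'I_m, c k = l 0 k by move=> k; rewrite /c valK.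
rewrite -cE; apply: indep; last by apply/ltP.
move=> j /ltP hj.
have := congr1 (fun M : 'M[R]_(1,p) => M 0 (Ordinal hj)) l0; rewrite !mxE => h; rewrite fsum_big; apply: (eq_trans _ h).
by apply: eq_bigr => k _; rewrite cE mxE.
Qed.

Lemma H'unit : H' \in unitmx.
Proof.
rewrite -row_free_unit; apply: inj_row_free => v vH.
apply: trmx_inj; rewrite trmx0; apply: pdM.
by rewrite trmxK vH mul0mx.
Qed.

Let Hi' := invmx H'.

Lemma pdHi (z : 'cV[R]_p) : z^T *m Hi' *m z = 0 -> z = 0.
Proof.
move=> h.
have zE : z = H' *m (Hi' *m z) by rewrite mulmxA mulmxV ?mul1mx // H'unit.
suff : Hi' *m z = 0 by move=> e; rewrite zE e mulmx0.
apply: pdM.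
have t1 : forall A : 'M[R]_1, A^T = A.
  by move=> A; apply/matrixP => i j; rewrite (ord1 i) (ord1 j) mxE.
have e1 : forall (y : 'cV[R]_p) (A : 'M[R]_p), (y^T *m A *m y)^T = (A *m y)^T *m y.
  by move=> y A; rewrite !trmx_mul trmxK mulmxA.
rewrite -[LHS]t1 e1 -zE.
by rewrite mulmxA.
Qed.

Let M' := U' *m (Hi' *m U'^T).

Lemma M'unit : M' \in unitmx.
Proof.
rewrite -row_free_unit; apply: inj_row_free => l lM.
apply: indepM; apply: trmx_inj; rewrite trmx0 trmx_mul.
apply: pdHi.
rewrite trmx_mul !trmxK.
have -> : l *m U' *m Hi' *m (U'^T *m l^T) = l *m M' *m l^T by rewrite /M' !mulmxA.
by rewrite lM mul0mx.
Qed.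

Lemma tM_PP : tM p p (PP p m U H) = Hi' - (Hi' *m U'^T *m invmx M') *m (U' *m Hi').
Proof.
have eH : tM p p (minv p H) = Hi' by rewrite minv_tM // H'unit.
have eM : tM m m (mmul p U (mmul p (minv p H) (transp U))) = M'.
  by rewrite !tM_mul tM_tr eH.
have eMi : tM m m (minv m (mmul p U (mmul p (minv p H) (transp U)))) = invmx M'.
  by rewrite minv_tM eM // M'unit.
apply/matrixP => i j.
rewrite [LHS]mxE /PP -(tME _ _ (minv p H) i j) eH.
rewrite -(tME _ _ (mmul m _ _) i j) !tM_mul tM_tr eH eMi.
by rewrite !mxE.
Qed.

Lemma PP_Ut : tM p p (PP p m U H) *m U'^T = 0.
Proof.
rewrite tM_PP mulmxBl -!mulmxA [U' *m (Hi' *m _)]mulmxA.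
have -> : U' *m Hi' *m U'^T = M' by rewrite /M' mulmxA.
by rewrite mulVmx ?M'unit // mulmx1 subrr.
Qed.

Lemma PP_H (D : 'cV[R]_p) : U' *m D = 0 -> tM p p (PP p m U H) *m (H' *m D) = D.
Proof.
move=> UD; rewrite tM_PP mulmxBl mulmxA mulVmx ?H'unit // mul1mx.
by rewrite -!mulmxA [Hi' *m (H' *m D)]mulmxA mulVmx ?H'unit // mul1mx UD !mulmx0 subr0.
Qed.

Lemma raw_PU j k : (j < p)%coq_nat -> (k < m)%coq_nat ->
  fsum p (fun l => Rmult (PP p m U H j l) (U k l)) = R0.
Proof.
move=> /ltP hj /ltP hk.
have := congr1 (fun M : 'M[R]_(p, m) => M (Ordinal hj) (Ordinal hk)) PP_Ut.
rewrite !mxE => h; apply: (eq_trans _ h); rewrite fsum_big.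
by apply: eq_bigr => l _; rewrite !mxE.
Qed.

Lemma raw_PH (D : vec) :
  (forall k, (k < m)%coq_nat -> fsum p (fun l => Rmult (U k l) (D l)) = R0) ->
  forall j, (j < p)%coq_nat ->
  fsum p (fun l => Rmult (PP p m U H j l) (fsum p (fun q => Rmult (H l q) (D q)))) = D j.
Proof.
move=> hD j /ltP hj.
have UD : U' *m tC p D = 0.
  apply/matrixP => k b; rewrite (ord1 b) !mxE.
  have := hD k (elimT ltP (ltn_ord k)) => h; apply: (eq_trans _ h).
  by rewrite fsum_big; apply: eq_bigr => l _; rewrite !mxE.
have := congr1 (fun M : 'cV[R]_p => M (Ordinal hj) 0) (PP_H _ UD).
rewrite !mxE => h; apply: (eq_trans _ h); rewrite fsum_big.
apply: eq_bigr => l _; rewrite !mxE fsum_big; congr (_ * _)%R.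
by apply: eq_bigr => q _; rewrite !mxE.
Qed.
End LA.

Local Close Scope ring_scope.
Open Scope R_scope.

Theorem proposition1
  (p r s : nat) (f : vec -> R)
  (v : nat -> vec) (d : nat -> R) (w : nat -> vec) (e : nat -> R)
  (G : vec -> vec) (Hs : vec -> mat)
  (* f is a function on R^p: it only depends on the first p coordinates *)
  (f_Rp : forall x y : vec, (forall i, (i < p)%coq_nat -> x i = y i) -> f x = f y)
  (* f convex *)
  (f_convex : forall (x y : vec) (t : R), 0 <= t <= 1 ->
      f (vadd (vscale t x) (vscale (1 - t) y)) <= t * f x + (1 - t) * f y)
  (* f twice continuously differentiable: gradient G, Hessian Hs continuous *)
  (f_grad : forall x, frechet_at p f x (G x))
  (f_hess : forall x i, (i < p)%coq_nat -> frechet_at p (fun y => G y i) x (Hs x i))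
  (hess_cont : forall x, cont_mat_at p Hs x)
  (* Hessian positive definite everywhere *)
  (hess_pd : forall x y : vec, (exists i, (i < p)%coq_nat /\ y i <> 0) ->
      0 < dot p y (mvec p (Hs x) y))
  (* I is an open interval contained in (0, +oo) *)
  (I : R -> Prop)
  (I_pos : forall rho, I rho -> 0 < rho)
  (I_interval : forall a b c, I a -> I c -> a <= b <= c -> I b)
  (I_open : forall rho, I rho -> exists delta, 0 < delta /\
      forall t, Rabs (t - rho) < delta -> I t)
  (xr : R -> vec)
  (x_min : forall rho, I rho -> forall y : vec,
      Epen p r s f v d w e rho (xr rho) <= Epen p r s f v d w e rho y)
  (x_cont : forall rho, I rho -> forall i, (i < p)%coq_nat ->
      continuity_pt (fun t => xr t i) rho)
  (x_sets : forall rho1 rho2, I rho1 -> I rho2 ->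
      same_index_sets p r s v d w e (xr rho1) (xr rho2))
  (U_indep : forall rho, I rho ->
      rows_lin_indep p (Zrows p r s v d w e (xr rho))) :
  forall rho, I rho -> forall i, (i < p)%coq_nat ->
    derivable_pt_lim (fun t => xr t i) rho
      (- mvec p (Pmat p r s v d w e Hs (xr rho)) (ubarZ p r s v d w e (xr rho)) i).

Proof.
apply (main_raw p r s f v d w e G Hs f_grad f_hess I I_open xr x_min x_cont x_sets U_indep).
intros x Hind. split.
- intros j k Hj Hk.
  exact (raw_PU p (length (Zrows p r s v d w e x)) (rows_mat (Zrows p r s v d w e x))
           (Hs x) (hess_pd x) Hind j k Hj Hk).
- intros D HD j Hj.
  exact (raw_PH p (length (Zrows p r s v d w e x)) (rows_mat (Zrows p r s v d w e x))
           (Hs x) (hess_pd x) Hind D HD j Hj).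
Qed.
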